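(* Let $p$ be a prime number, $J$ a positive integer, and $G$ a finite group. Let $\tilde A$ be a normal subgroup of $G$ of index at most $J$, and suppose $\tilde A$ is abelian (respectively, nilpotent of class at most $c$). Then $G$ contains a normal subgroup $A$ such that the minimal number of generators of $A$ does not exceed that of $\tilde A$, the order of $A$ is coprime to $p$, the index of $A$ in $G$ is at most $J\cdot|G_p|$ where $G_p$ is a $p$-Sylow subgroup of $G$, and $A$ is abelian (respectively, nilpotent of class at most $c$).
   Context: A group is nilpotent of class at most $c$ if its upper central series has length at most $c$. *)

(* Defs.v *)
From mathcomp Require Import all_boot all_fingroup all_solvable.
Set Implicit Arguments.
Unset Strict Implicit.
Unset Printing Implicit Defensive.
Open Scope group_scope.

(* Minimal number of generators d(G) of a finite group G:
   the least #|X| over all subsets X with <<X>> = G (X = G is such a set,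
   so the default value #|G| of the min is never strictly attained beyond it). *)
Definition ngen (gT : finGroupType) (G : {group gT}) : nat :=
  \big[minn/#|G|]_(X : {set gT} | <<X>> == G) #|X|.

(* Main.v *)
Require Import Defs.
From mathcomp Require Import all_boot all_fingroup all_solvable.
Open Scope group_scope.

Lemma bigminn_le (I : finType) (P : pred I) (F : I -> nat) x0 j :
  P j -> (\big[minn/x0]_(i | P i) F i <= F j)%N.
Proof.
move=> Pj; rewrite -big_filter.
have : j \in [seq i <- index_enum I | P i] by rewrite mem_filter Pj mem_index_enum.
elim: [seq _ <- _ | _] => //= a s IH; rewrite inE big_cons => /orP[/eqP<-|/IH h].
  exact: geq_minl.
by rewrite geq_min h orbT.
Qed.

Lemma ngen_le (gT : finGroupType) (H : {group gT}) (Y : {set gT}) :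
  <<Y>> = H -> ngen H <= #|Y|.
Proof.
by move=> eY; rewrite /ngen; apply: bigminn_le; rewrite eY eqxx.
Qed.

Lemma ngen_morphim (aT rT : finGroupType) (D : {group aT})
  (f : {morphism D >-> rT}) (H : {group aT}) :
  H \subset D -> ngen (f @* H)%G <= ngen H.
Proof.
move=> sHD; rewrite {2}/ngen; apply: (big_ind (fun m => ngen (f @* H)%G <= m)).
- rewrite (leq_trans _ (leq_imset_card f H)) //.
  apply: ngen_le; rewrite /= -morphimEsub // genGid //.
- by move=> x y hx hy; rewrite leq_min hx hy.
move=> X /eqP eX; have sXD : X \subset D by rewrite (subset_trans _ sHD) // -eX subset_gen.
rewrite (leq_trans _ (leq_imset_card f X)) //.
by apply: ngen_le; rewrite /= -morphimEsub // -morphim_gen // eX.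
Qed.

Lemma key (gT : finGroupType) (G At : {group gT}) (p J : nat) :
  prime p -> At <| G -> #|G : At| <= J -> nilpotent At ->
  exists f : {morphism At >-> gT},
    let A := (f @* At)%G in
       [/\ A <| G, ngen A <= ngen At, coprime #|A| p &
           (forall P : {group gT}, P \in 'Syl_p(G) -> #|G : A| <= J * #|P|)].
Proof.
move=> pr_p nAtG leJ nilAt.
set K := 'O_p(At)%G; set A := 'O_p^'(At)%G.
have dKA : K \x A = At := nilpotent_pcoreC p nilAt.
have [_ eKA cKA tiKA] := dprodP dKA.
have compl : A \in [complements to K in At] by apply/complP.
have nKAt : K <| At := pcore_normal _ _.
have fM : morphic At (remgr K A).
  by apply/morphicP; apply: remgrM.
exists (morphm_morphism fM).
have eA : (morphm_morphism fM @* At)%G = A.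
  apply/val_inj => /=; rewrite morphimEdom; apply/setP => y; apply/imsetP/idP.
    by case=> x Ax ->; apply: mem_remgr; rewrite eKA.
  move=> Ay; exists y; first exact: (subsetP (pcore_sub p^' At)).
  by symmetry; apply: (remgr_id tiKA).
have eAs := congr1 val eA; rewrite /= eA; rewrite /= in eAs; rewrite eAs; split.
- exact: char_normal_trans (pcore_char _ _) nAtG.
- by have := @ngen_morphim _ _ _ (morphm_morphism fM) _ (subxx At); rewrite eA.
- have := pcore_pgroup p^' At; rewrite /pgroup p'natE // => h.
  by rewrite coprime_sym prime_coprime.
move=> P; rewrite inE => sylP.
have sAtG := normal_sub nAtG.
have sAAt : A \subset At := pcore_sub _ _.
rewrite -(Lagrange_index sAtG sAAt) leq_mul //.
have -> : #|At : A| = #|K|.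
  by rewrite -divgI (setIidPr sAAt) -(dprod_card dKA) mulnK.
have sKG : K \subset G := subset_trans (pcore_sub _ _) sAtG.
have [x _ sKP] := Sylow_subJ sylP sKG (pcore_pgroup _ _).
by rewrite -(cardJg P x) subset_leq_card.
Qed.

Theorem lemma2p5 (gT : finGroupType) (G At : {group gT}) (p J : nat) :
  prime p -> 0 < J -> At <| G -> #|G : At| <= J ->
  (abelian At ->
     exists A : {group gT},
       [/\ A <| G, ngen A <= ngen At, coprime #|A| p,
           (forall P : {group gT}, P \in 'Syl_p(G) -> #|G : A| <= J * #|P|)
         & abelian A])
  /\
  (forall c : nat, 'Z_c(At) = At ->
     exists A : {group gT},
       [/\ A <| G, ngen A <= ngen At, coprime #|A| p,
           (forall P : {group gT}, P \in 'Syl_p(G) -> #|G : A| <= J * #|P|)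
         & 'Z_c(A) = A]).
Proof.
move=> pr_p _ nAtG leJ; split.
  move=> abA; have [f [h1 h2 h3 h4]] := @key _ _ _ _ _ pr_p nAtG leJ (abelian_nil abA).
  by exists (f @* At)%G; split => //=; apply: morphim_abelian.
move=> c Zc; have nilAt : nilpotent At by apply/ucnP; exists c.
have [f [h1 h2 h3 h4]] := @key _ _ _ _ _ pr_p nAtG leJ nilAt.
exists (f @* At)%G; split => //=.
apply/ucn_nil_classP; first exact: morphim_nil.
apply: leq_trans (nil_class_morphim _ nilAt) _.
exact/ucn_nil_classP.
Qed.
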